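(* Fix $p \in (0,1)$ and $r \in (0,1)$. For each positive integer $k$, let $n_k > 0$ be a number satisfying \[ I_{1-p}(n_k, k+1) = r, \] where $I_z(a,b)$ denotes the regularized incomplete beta function. Then $\frac{n_k}{k}$ tends to a limit as $k \to \infty$ which does not depend on $r$, namely \[ \lim_{k \to \infty} \frac{n_k}{k} = \frac{1}{p} - 1 . \]
   Context: The regularized incomplete beta function is $I_z(a,b) = \frac{\int_0^z t^{a-1}(1-t)^{b-1}\,dt}{\int_0^1 t^{a-1}(1-t)^{b-1}\,dt}$ for $z\in[0,1]$, $a,b>0$. For positive integers $n,k$ one has $I_{1-p}(n,k+1) = \sum_{x=0}^{k} \binom{n+k}{x} p^x (1-p)^{n+k-x}$, i.e. the probability that at most $k$ of $n+k$ independent nodes, each failing with probability $p$, fail. In the paper's setting $n$ is the number of critical nodes of a virtual infrastructure, $k$ the number of backup nodes, $p$ the independent per-node failure probability, and $r$ the reliability guarantee. *)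

(* Defs.v *)
From HB Require Import structures.
From mathcomp Require Import all_boot all_order all_algebra.
From mathcomp Require Import all_classical all_reals all_analysis.
Set Implicit Arguments. Unset Strict Implicit. Unset Printing Implicit Defensive.
Import Order.TTheory GRing.Theory Num.Theory.
Import numFieldNormedType.Exports.
Local Open Scope classical_set_scope.
Local Open Scope ring_scope.

Definition beta_integral (R : realType) (z a b : R) : R :=
  Rintegral (@lebesgue_measure R) `[0%R, z]%classic
    (fun t => t `^ (a - 1) * (1 - t) `^ (b - 1)).

Definition reg_inc_beta (R : realType) (z a b : R) : R :=
  beta_integral z a b / beta_integral 1 a b.

(* Main.v *)
Require Import Defs.
From HB Require Import structures.
From mathcomp Require Import all_boot all_order all_algebra.
From mathcomp Require Import all_classical all_reals all_analysis.
From mathcomp Require Import measurable_realfun.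
From mathcomp Require Import lra ring.
Import Order.TTheory GRing.Theory Num.Theory.
Import numFieldNormedType.Exports.
Local Open Scope classical_set_scope.

Local Open Scope ring_scope.

Section S.
Variable R : realType.
Notation mu := (@lebesgue_measure R).

Lemma split01 (q : R) : 0 <= q <= 1 ->
  `[0%R, 1%R]%classic = `[0%R, q]%classic `|` `]q, 1%R]%classic :> set R.
Proof.
move=> /andP[q0 q1]; apply/seteqP; split => x /=; rewrite !in_itv /=.
  move=> /andP[x0 x1]; case: (leP x q) => xq; [left|right]; apply/andP; split => //.
move=> [/andP[x0 xq]|/andP[xq x1]]; apply/andP; split => //; lra.
Qed.

Lemma disj01 (q : R) : [disjoint `[0%R, q]%classic & `]q, 1%R]%classic].
Proof.
rewrite disj_set2E; apply/eqP/seteqP; split => x //=; rewrite !in_itv /=.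
move=> [/andP[_ a] /andP[b _]]; lra.
Qed.

Lemma decomp (f : R -> R) (q r : R) : measurable_fun setT f ->
  (forall t, 0 <= f t) -> 0 < q < 1 -> 0 < r ->
  r = Rintegral mu `[0%R, q]%classic f / Rintegral mu `[0%R, 1%R]%classic f ->
  exists N M : R, [/\ 0 <= N, 0 <= M,
    (\int[mu]_(x in `[0%R, q]) (f x)%:E = N%:E)%E,
    (\int[mu]_(x in `]q, 1%R]) (f x)%:E = M%:E)%E & r * (N + M) = N].
Proof.
move=> mf f0 /andP[q0 q1] r0 hr.
have mfe : measurable_fun setT (EFin \o f) by apply/measurable_EFinP.
have f0e : forall x, (0 <= (f x)%:E)%E by move=> x; rewrite lee_fin.
have hU : (\int[mu]_(x in `[0%R, 1%R]) (f x)%:E =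
   \int[mu]_(x in `[0%R, q]) (f x)%:E + \int[mu]_(x in `]q, 1%R]) (f x)%:E)%E.
  rewrite (@split01 q); last by apply/andP; split; lra.
  apply: ge0_integral_setU => //; first exact: measurable_funTS.
  exact: disj01.
have iN := @integral_ge0 _ _ _ mu `[0%R, q] (fun x => (f x)%:E) (fun x _ => f0e x).
have iM := @integral_ge0 _ _ _ mu `]q, 1%R] (fun x => (f x)%:E) (fun x _ => f0e x).
move: hr; rewrite /Rintegral hU.
move: iN iM.
case: (\int[mu]_(x in `[0%R, q]) (f x)%:E)%E => [N| |] //;
case: (\int[mu]_(x in `]q, 1%R]) (f x)%:E)%E => [M| |] //.
- rewrite !lee_fin => N0 M0 /= hr; exists N, M; split => //.
  rewrite hr; have [NM|NM0] := eqVneq (N + M) 0; first by move: hr; rewrite NM invr0 mulr0 => hr; lra.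
  by rewrite mulfVK.
- move=> _ _ /= hr; lra.
- move=> _ _ /= hr; lra.
- move=> _ _ /= hr; lra.
Qed.

Lemma mu_cc (a b : R) : a <= b -> mu `[a, b]%classic = (b - a)%:E.
Proof.
move=> ab; rewrite lebesgue_measure_itv /= lte_fin.
case: ltP => h; first by rewrite EFinB.
have -> : b = a by apply/eqP; rewrite eq_le ab h.
by rewrite subrr.
Qed.

Lemma mu_oc (a b : R) : a <= b -> mu `]a, b]%classic = (b - a)%:E.
Proof.
move=> ab; rewrite lebesgue_measure_itv /= lte_fin.
case: ltP => h; first by rewrite EFinB.
have -> : b = a by apply/eqP; rewrite eq_le ab h.
by rewrite subrr.
Qed.

Lemma int_ub (D : set R) (f : R -> R) (C : R) : measurable D ->
  measurable_fun setT f -> (forall t, 0 <= f t) ->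
  (forall t, D t -> f t <= C) ->
  (\int[mu]_(x in D) (f x)%:E <= C%:E * mu D)%E.
Proof.
move=> mD mf f0 fC.
rewrite -integral_cst //.
apply: ge0_le_integral => //;
 try (by move=> x _; rewrite lee_fin); try (by apply/measurable_EFinP; exact: measurable_funTS);
 try (by move=> x Dx; rewrite /= lee_fin fC).
Qed.

Lemma int_lb (D J : set R) (f : R -> R) (L : R) : measurable D -> measurable J ->
  J `<=` D -> measurable_fun setT f -> (forall t, 0 <= f t) -> 0 <= L ->
  (forall t, J t -> L <= f t) ->
  (L%:E * mu J <= \int[mu]_(x in D) (f x)%:E)%E.
Proof.
move=> mD mJ JD mf f0 L0 fL.
apply: (@le_trans _ _ (\int[mu]_(x in J) (f x)%:E)%E).
  rewrite -integral_cst //.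
  apply: ge0_le_integral => //;
  try (by move=> x _; rewrite lee_fin); try (by apply/measurable_EFinP; exact: measurable_funTS);
  try (by move=> x Jx; rewrite /= lee_fin fL).
apply: ge0_subset_integral => //;
  try (by apply/measurable_EFinP; exact: measurable_funTS);
  try (by move=> x _; rewrite lee_fin).
Qed.

Lemma dirA (f : R -> R) (q r B L u v : R) : measurable_fun setT f ->
  (forall t, 0 <= f t) -> 0 < q < 1 -> 0 < r ->
  r = Rintegral mu `[0%R, q]%classic f / Rintegral mu `[0%R, 1%R]%classic f ->
  (forall t, 0 <= t <= q -> f t <= B) -> q < u -> u <= v -> v <= 1 -> 0 <= L ->
  (forall t, u <= t <= v -> L <= f t) -> r * (L * (v - u)) <= B * q.
Proof.
move=> mf f0 hq r0 hr fB qu uv v1 L0 fL.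
have [N [M [N0 M0 hN hM hNM]]] := @decomp f q r mf f0 hq r0 hr.
have hq' := hq; move/andP: hq' => [q0 q1].
have H1 : N <= B * q.
  rewrite -lee_fin -hN.
  have := @int_ub `[0%R, q]%classic f B (measurable_itv _) mf f0.
  rewrite mu_cc; last lra.
  rewrite subr0 -EFinM; apply => t /=; rewrite in_itv /=; exact: fB.
have H2 : L * (v - u) <= M.
  rewrite -lee_fin -hM EFinM -mu_cc //.
  apply: int_lb => //; try exact: measurable_itv;
  try (by move=> x /=; rewrite !in_itv /= => /andP[a b]; apply/andP; split; lra);
  try (by move=> t /=; rewrite in_itv /=; exact: fL).
have rN : 0 <= r * N by apply: mulr_ge0; lra.
nra.
Qed.

Lemma dirB (f : R -> R) (q r B L u v : R) : measurable_fun setT f ->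
  (forall t, 0 <= f t) -> 0 < q < 1 -> 0 < r -> r < 1 ->
  r = Rintegral mu `[0%R, q]%classic f / Rintegral mu `[0%R, 1%R]%classic f ->
  (forall t, q < t <= 1 -> f t <= B) -> 0 <= u -> u <= v -> v <= q -> 0 <= L ->
  (forall t, u <= t <= v -> L <= f t) -> (1 - r) * (L * (v - u)) <= B * (1 - q).
Proof.
move=> mf f0 hq r0 r1 hr fB u0 uv vq L0 fL.
have [N [M [N0 M0 hN hM hNM]]] := @decomp f q r mf f0 hq r0 hr.
have hq' := hq; move/andP: hq' => [q0 q1].
have H1 : M <= B * (1 - q).
  rewrite -lee_fin -hM.
  have := @int_ub `]q, 1%R]%classic f B (measurable_itv _) mf f0.
  rewrite mu_oc; last lra.
  rewrite -EFinM; apply => t /=; rewrite in_itv /=; exact: fB.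
have H2 : L * (v - u) <= N.
  rewrite -lee_fin -hN EFinM -mu_cc //.
  apply: int_lb => //; try exact: measurable_itv;
  try (by move=> x /=; rewrite !in_itv /= => /andP[a b]; apply/andP; split; lra);
  try (by move=> t /=; rewrite in_itv /=; exact: fL).
have rN : 0 <= (1 - r) * M by apply: mulr_ge0; lra.
nra.
Qed.
End S.
Section A.
Variable R : realType.
Implicit Types p q t A K X Y e : R.

Lemma alg_upA p q t A K X Y : 0 < p -> p + q = 1 -> 0 < t <= q -> 0 <= A -> 0 <= K ->
  K * q <= A * p -> q * X <= t - q -> p * Y <= q - t -> A * X + K * Y <= 0.
Proof.
move=> p0 pq /andP[t0 tq] A0 K0 hA hX hY.
have h1 : p * A * (q * X) <= p * A * (t - q) by apply: ler_wpM2l => //; nra.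
have h2 : q * K * (p * Y) <= q * K * (q - t) by apply: ler_wpM2l => //; nra.
have h3 : (q - t) * (q * K - p * A) <= 0 by nra.
have h4 : p * q * (A * X + K * Y) <= 0 by nra.
have pq0 : 0 < p * q by nra.
by rewrite -(pmulr_rle0 _ pq0).
Qed.

Lemma alg_loA p q t A K X Y e : 0 < p -> p + q = 1 -> 0 < q -> 0 <= K -> 0 < e -> e <= 1 ->
  K * (q + e) <= A * p -> q + e * p / 8 <= t -> t <= q + e * p / 4 ->
  t - q <= t * X -> q - t <= (1 - t) * Y -> K * (e * p / 8) * (e / 2) <= A * X + K * Y.
Proof.
move=> p0 pq q0 K0 e0 e1 hA t1 t2 hX hY.
have Kqe : 0 <= K * (q + e) by apply: mulr_ge0; lra.
have Ap0 : 0 <= A * p by lra.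
have A0 : 0 <= A by nra.
have t0 : 0 < t by nra.
have t1' : 0 < 1 - t by nra.
set s := t - q.
have s0 : 0 <= s by rewrite /s; nra.
have sp : s <= e * p / 4 by rewrite /s; lra.
have W : K * e / 2 <= A * (1 - t) - K * t.
  have hA' : K * (q + e) * (p - s) <= A * p * (p - s) by apply: ler_wpM2r => //; nra.
  have : p * (K * e / 2) <= p * (A * (1 - t) - K * t).
    have -> : 1 - t = p - s by rewrite /s; lra.
    have -> : t = q + s by rewrite /s; lra.
    have hs : s * (1 + e) <= e * p / 2 by nra.
    have hK : 0 <= K * (e * p / 2 - s * (1 + e)) by apply: mulr_ge0; lra.
    have qp : q = 1 - p by lra.
    rewrite qp in hA' *.
    nra.
  by rewrite ler_pM2l.
have h1 : (1 - t) * A * (t - q) <= (1 - t) * A * (t * X) by apply: ler_wpM2l => //; nra.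
have h2 : t * K * (q - t) <= t * K * ((1 - t) * Y) by apply: ler_wpM2l => //; nra.
have Z : s * (A * (1 - t) - K * t) <= t * (1 - t) * (A * X + K * Y) by rewrite /s; nra.
have Z2 : (e * p / 8) * (K * e / 2) <= s * (A * (1 - t) - K * t).
  apply: ler_pM => //; [nra|nra|rewrite /s; lra].
have tt : t * (1 - t) <= 1 by nra.
have tt0 : 0 < t * (1 - t) by nra.
have S0 : 0 <= A * X + K * Y.
  have KE : 0 <= K * e by nra.
  have EP : 0 <= e * p by nra.
  have c0 : 0 <= (e * p / 8) * (K * e / 2) by nra.
  have : 0 <= t * (1 - t) * (A * X + K * Y) by apply: le_trans Z; apply: le_trans Z2.
  by rewrite pmulr_rge0.
nra.
Qed.

Lemma alg_upB p q t A K X Y : 0 < p -> p + q = 1 -> 0 < q -> q < t < 1 -> 0 <= K ->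
  A * p <= K * q -> q * X <= t - q -> t - q <= t * X -> p * Y <= q - t -> A * X + K * Y <= 0.
Proof.
move=> p0 pq q0 /andP[t0 t1] K0 hA hX hX' hY.
have X0 : 0 <= X by nra.
have Y0 : Y <= 0 by nra.
have KY : K * Y <= 0 by nra.
case: (leP 0 A) => A0; last by nra.
have h1 : p * A * (q * X) <= p * A * (t - q) by apply: ler_wpM2l => //; nra.
have h2 : q * K * (p * Y) <= q * K * (q - t) by apply: ler_wpM2l => //; nra.
have h3 : (t - q) * (p * A - q * K) <= 0 by nra.
have h4 : p * q * (A * X + K * Y) <= 0 by nra.
have pq0 : 0 < p * q by nra.
by rewrite -(pmulr_rle0 _ pq0).
Qed.

Lemma alg_loB p q t A K X Y e : 0 < p -> p + q = 1 -> 0 <= K -> 0 < e -> e <= q / 2 ->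
  A * p <= K * (q - e) -> q - e * p / 4 <= t -> t <= q - e * p / 8 ->
  t - q <= t * X -> q * X <= t - q -> q - t <= (1 - t) * Y ->
  K * (e * p / 8) * (e / 2) <= A * X + K * Y.
Proof.
move=> p0 pq K0 e0 eq hA t1 t2 hX hX' hY.
have q0 : 0 < q by nra.
have ep : e * p <= e by nra.
have t0 : 0 < t by nra.
have t1' : 0 < 1 - t by nra.
have X0 : X <= 0 by nra.
set s := q - t.
have s0 : 0 <= s by rewrite /s; nra.
have sp : s <= e * p / 4 by rewrite /s; lra.
have [Ap [Ap0 hAp AX]] : exists Ap, [/\ 0 <= Ap, Ap * p <= K * (q - e) & - Ap * s <= t * (A * X)].
  case: (leP 0 A) => hA0.
    exists A; split => //.
    have : A * (t - q) <= A * (t * X) by apply: ler_wpM2l.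
    rewrite /s; nra.
  exists 0; split => //; first by rewrite mul0r; nra.
  rewrite oppr0 mul0r; apply: mulr_ge0; [lra|nra].
have W : K * e / 2 <= K * t - Ap * (1 - t).
  have hA' : Ap * p * (p + s) <= K * (q - e) * (p + s) by apply: ler_wpM2r => //; nra.
  have : p * (K * e / 2) <= p * (K * t - Ap * (1 - t)).
    have -> : 1 - t = p + s by rewrite /s; lra.
    have -> : t = q - s by rewrite /s; lra.
    have hs : s * (1 - e) <= e * p / 2 by nra.
    have hK : 0 <= K * (e * p / 2 - s * (1 - e)) by apply: mulr_ge0; lra.
    have qp : q = 1 - p by lra.
    rewrite qp in hA' *.
    nra.
  by rewrite ler_pM2l.
have h2 : t * K * (q - t) <= t * K * ((1 - t) * Y) by apply: ler_wpM2l => //; nra.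
have Z : s * (K * t - Ap * (1 - t)) <= t * (1 - t) * (A * X + K * Y) by rewrite /s in AX *; nra.
have Z2 : (e * p / 8) * (K * e / 2) <= s * (K * t - Ap * (1 - t)).
  apply: ler_pM => //; [nra|nra|rewrite /s; lra].
have tt : t * (1 - t) <= 1 by nra.
have tt0 : 0 < t * (1 - t) by nra.
have S0 : 0 <= A * X + K * Y.
  have KE : 0 <= K * e by nra.
  have EP : 0 <= e * p by nra.
  have c0 : 0 <= (e * p / 8) * (K * e / 2) by nra.
  have : 0 <= t * (1 - t) * (A * X + K * Y) by apply: le_trans Z; apply: le_trans Z2.
  by rewrite pmulr_rge0.
nra.
Qed.
End A.
Section B.
Variable R : realType.

Definition fb (a K t : R) := t `^ (a - 1) * (1 - t) `^ K.

Lemma fb_ge0 a K t : 0 <= fb a K t.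
Proof. by rewrite /fb mulr_ge0 // powR_ge0. Qed.

Lemma fb_meas a K : measurable_fun setT (fb a K).
Proof.
apply: measurable_funM; first exact: measurable_powR.
apply: (@measurableT_comp _ _ _ _ _ _ (fun x : R => x `^ K) _ (fun t : R => 1 - t)).
  exact: measurable_powR.
apply: measurable_funB => //; exact: measurable_cst.
Qed.

Lemma fb_exp a K t : 0 < t < 1 ->
  fb a K t = expR ((a - 1) * ln t + K * ln (1 - t)).
Proof.
move=> /andP[t0 t1]; rewrite /fb /powR.
rewrite (negbTE (lt0r_neq0 t0)).
have : 0 < 1 - t by lra.
move=> /lt0r_neq0 /negbTE ->.
by rewrite expRD.
Qed.

Lemma lnd1 (x y : R) : 0 < x -> 0 < y -> y * (ln x - ln y) <= x - y.
Proof.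
move=> x0 y0.
have xy : 0 < x / y by rewrite divr_gt0.
rewrite -ln_div ?posrE //.
have := le_ln1Dx (x := x / y - 1) ltac:(lra).
rewrite addrCA subrr addr0 => h.
have : y * ln (x / y) <= y * (x / y - 1) by rewrite ler_pM2l.
by rewrite mulrBr mulrCA divff ?mulr1 ?lt0r_neq0 // mulr1.
Qed.

Lemma lnd2 (x y : R) : 0 < x -> 0 < y -> x - y <= x * (ln x - ln y).
Proof.
move=> x0 y0.
have := @lnd1 y x y0 x0.
have -> : x * (ln x - ln y) = - (x * (ln y - ln x)) by rewrite -mulrN opprB.
lra.
Qed.
End B.

Arguments fb {R}.

Section C.
Variable R : realType.
Implicit Types a K p e t : R.

Lemma ptA_up a K p e t : 0 < p < 1 -> 0 < K -> 0 < e ->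
  K * ((1 - p) + e) <= (a - 1) * p -> 0 <= t <= 1 - p -> fb a K t <= fb a K (1 - p).
Proof.
move=> /andP[p0 p1] K0 e0 hA /andP[t0 tq].
have A0 : 0 < a - 1.
  have : 0 < K * ((1 - p) + e) by apply: mulr_gt0; lra.
  move=> h; have : 0 < (a - 1) * p by lra.
  by rewrite pmulr_lgt0.
have [->|tn0] := eqVneq t 0.
  rewrite /fb powR0 ?mul0r ?fb_ge0 //; exact: lt0r_neq0.
have t0' : 0 < t by rewrite lt0r tn0.
rewrite !fb_exp; [|lra|lra].
rewrite ler_expR.
have hX := @lnd1 R t (1 - p) t0' ltac:(lra).
have hY := @lnd1 R (1 - t) p ltac:(lra) p0.
have := @alg_upA R p (1 - p) t (a - 1) K (ln t - ln (1 - p)) (ln (1 - t) - ln p)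
  p0 ltac:(lra) ltac:(apply/andP; split; lra) ltac:(lra) ltac:(lra) ltac:(nra) hX ltac:(lra).
have -> : 1 - (1 - p) = p by lra.
lra.
Qed.

Lemma ptA_lo a K p e t : 0 < p < 1 -> 0 < K -> 0 < e -> e <= 1 ->
  K * ((1 - p) + e) <= (a - 1) * p ->
  (1 - p) + e * p / 8 <= t -> t <= (1 - p) + e * p / 4 ->
  fb a K (1 - p) * expR (K * (e * p / 8) * (e / 2)) <= fb a K t.
Proof.
move=> /andP[p0 p1] K0 e0 e1 hA t1 t2.
have ep : e * p <= p by nra.
have ep0 : 0 < e * p by nra.
rewrite !fb_exp; [|lra|lra].
rewrite -expRD ler_expR.
have hX := @lnd2 R t (1 - p) ltac:(lra) ltac:(lra).
have hY := @lnd2 R (1 - t) p ltac:(lra) p0.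
have := @alg_loA R p (1 - p) t (a - 1) K (ln t - ln (1 - p)) (ln (1 - t) - ln p) e
  p0 ltac:(lra) ltac:(lra) ltac:(lra) e0 e1 hA t1 t2 hX ltac:(lra).
have -> : 1 - (1 - p) = p by lra.
lra.
Qed.

Lemma ptB_up a K p e t : 0 < p < 1 -> 0 < K ->
  (a - 1) * p <= K * ((1 - p) - e) -> 0 <= e ->
  1 - p < t <= 1 -> fb a K t <= fb a K (1 - p).
Proof.
move=> /andP[p0 p1] K0 hA e0 /andP[t0 t1].
have [->|tn1] := eqVneq t 1.
  rewrite /fb subrr powR0 ?mulr0 ?fb_ge0 //; exact: lt0r_neq0.
have t1' : t < 1 by rewrite lt_neqAle tn1.
rewrite !fb_exp; [|lra|lra].
rewrite ler_expR.
have hX := @lnd1 R t (1 - p) ltac:(lra) ltac:(lra).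
have hX' := @lnd2 R t (1 - p) ltac:(lra) ltac:(lra).
have hY := @lnd1 R (1 - t) p ltac:(lra) p0.
have hK : K * ((1 - p) - e) <= K * (1 - p) by rewrite ler_pM2l //; lra.
have := @alg_upB R p (1 - p) t (a - 1) K (ln t - ln (1 - p)) (ln (1 - t) - ln p)
  p0 ltac:(lra) ltac:(lra) ltac:(apply/andP; split; lra) ltac:(lra) ltac:(lra) hX hX' ltac:(lra).
have -> : 1 - (1 - p) = p by lra.
lra.
Qed.

Lemma ptB_lo a K p e t : 0 < p < 1 -> 0 < K -> 0 < e -> e <= (1 - p) / 2 ->
  (a - 1) * p <= K * ((1 - p) - e) ->
  (1 - p) - e * p / 4 <= t -> t <= (1 - p) - e * p / 8 ->
  fb a K (1 - p) * expR (K * (e * p / 8) * (e / 2)) <= fb a K t.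
Proof.
move=> /andP[p0 p1] K0 e0 e1 hA t1 t2.
have ep : e * p <= e by nra.
have ep0 : 0 < e * p by nra.
rewrite !fb_exp; [|lra|lra].
rewrite -expRD ler_expR.
have hX := @lnd2 R t (1 - p) ltac:(lra) ltac:(lra).
have hX' := @lnd1 R t (1 - p) ltac:(lra) ltac:(lra).
have hY := @lnd2 R (1 - t) p ltac:(lra) p0.
have := @alg_loB R p (1 - p) t (a - 1) K (ln t - ln (1 - p)) (ln (1 - t) - ln p) e
  p0 ltac:(lra) ltac:(lra) e0 e1 hA t1 t2 hX hX' ltac:(lra).
have -> : 1 - (1 - p) = p by lra.
lra.
Qed.
End C.

Section D.
Variable R : realType.

Lemma contra_arith (F E w s q K g : R) : 0 < F -> 0 < s -> 0 < w -> 0 < g ->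
  1 + K * g <= E -> q <= 1 -> s * (F * E * w) <= F * q -> 1 < K * (s * g * w) -> False.
Proof.
move=> F0 s0 w0 g0 hE q1 h1 h2.
have h3 : s * E * w <= q.
  have : F * (s * E * w) <= F * q by nra.
  by rewrite ler_pM2l.
have h4 : s * w * (1 + K * g) <= s * w * E by apply: ler_wpM2l => //; nra.
have h5 : 0 <= s * w by nra.
nra.
Qed.

Lemma final_arith (p e eps K n : R) : 0 < p -> 0 < eps -> 0 < e -> e <= eps * p / 2 ->
  2 / eps <= K -> K * ((1 - p) - e) < (n - 1) * p -> (n - 1) * p < K * ((1 - p) + e) ->
  `|(p^-1 - 1) - n / K| < eps.
Proof.
move=> p0 eps0 e0 he hK h1 h2.
have K0 : 0 < K by apply: lt_le_trans hK; rewrite divr_gt0.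
have hK2 : 2 <= K * eps by rewrite -ler_pdivrMr.
set x := (p^-1 - 1) - n / K.
have hx : K * p * x = K * (1 - p) - n * p.
  rewrite /x; field.
  by apply/andP; split; apply: lt0r_neq0.
have Kp0 : 0 < K * p by apply: mulr_gt0.
have hKe : K * e <= K * (eps * p / 2) by rewrite ler_pM2l.
rewrite ltr_norml; apply/andP; split.
- rewrite -(ltr_pM2l Kp0) hx; nra.
- rewrite -(ltr_pM2l Kp0) hx; nra.
Qed.
End D.

Theorem theorem1 (R : realType) (p r : R) (n : nat -> R) :
  0 < p < 1 -> 0 < r < 1 ->
  (forall k : nat, (0 < k)%N ->
     0 < n k /\ reg_inc_beta (1 - p) (n k) (k.+1)%:R = r) ->
  (fun k : nat => n k / k%:R) @ \oo --> (p^-1 - 1).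
Proof.
move=> hp /andP[r0 r1] hn.
have hp' := hp; move/andP: hp' => [p0 p1].
apply/cvgrPdist_lt => eps eps0.
set e := Num.min (eps * p) (1 - p) / 2.
have e1 : e <= eps * p / 2.
  by rewrite /e ler_pM2r // ge_min lexx.
have e2 : e <= (1 - p) / 2.
  by rewrite /e ler_pM2r // ge_min lexx orbT.
have e0 : 0 < e.
  rewrite /e divr_gt0 // lt_min; apply/andP; split; [exact: mulr_gt0|lra].
have ep0 : 0 < e * p by apply: mulr_gt0.
have epp : e * p <= p by nra.
have epe : e * p <= e by nra.
set w := e * p / 8.
set g := w * (e / 2).
have w0 : 0 < w by rewrite /w; apply: divr_gt0 => //; exact: mulr_gt0.
have g0 : 0 < g by rewrite /g; apply: mulr_gt0 => //; lra.
set c1 := r * g * w.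
set c2 := (1 - r) * g * w.
have c10 : 0 < c1 by rewrite /c1; apply: mulr_gt0 => //; apply: mulr_gt0.
have c20 : 0 < c2 by rewrite /c2; apply: mulr_gt0 => //; apply: mulr_gt0 => //; lra.
set T := c1^-1 + c2^-1 + 2 / eps.
have c1i : 0 < c1^-1 by rewrite invr_gt0.
have c2i : 0 < c2^-1 by rewrite invr_gt0.
have ei : 0 < 2 / eps by rewrite divr_gt0.
exists (Num.truncn T).+1 => // k /= hk.
have KT : T < k%:R.
  apply: lt_le_trans (truncnS_gt T) _; by rewrite ler_nat.
set K := k%:R : R.
have T0 : 0 < T by rewrite /T; lra.
have K0 : 0 < K by lra.
have KT2 := KT; rewrite /T in KT2.
have k0 : (0 < k)%N by rewrite -(ltr0n R).
have [nk0 hI] := hn k k0.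
have hK1 : 1 < K * c1.
  by rewrite -ltr_pdivrMr // mul1r; lra.
have hK2 : 1 < K * c2.
  by rewrite -ltr_pdivrMr // mul1r; lra.
have hK3 : 2 / eps <= K by lra.
have hb : (k.+1%:R - 1 : R) = K by rewrite /K -addn1 natrD addrK.
move: hI; rewrite /reg_inc_beta /beta_integral hb => hI.
have hr : r = Rintegral (@lebesgue_measure R) `[0%R, 1 - p]%classic (fb (n k) K) /
              Rintegral (@lebesgue_measure R) `[0%R, 1%R]%classic (fb (n k) K)
  by rewrite -hI.
have Fq0 : 0 < fb (n k) K (1 - p) by rewrite fb_exp ?expR_gt0 //; apply/andP; split; lra.
have eg : K * (e * p / 8) * (e / 2) = K * g by rewrite /g [RHS]mulrA.
have hE : 1 + K * g <= expR (K * g) by exact: expR_ge1Dx.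
have hq : 0 < 1 - p < 1 by apply/andP; split; lra.
have hup : (n k - 1) * p < K * ((1 - p) + e).
  rewrite ltNge; apply/negP => hA.
  have := @dirA R (fb (n k) K) (1 - p) r (fb (n k) K (1 - p))
    (fb (n k) K (1 - p) * expR (K * (e * p / 8) * (e / 2)))
    ((1 - p) + e * p / 8) ((1 - p) + e * p / 4) (@fb_meas R (n k) K) (@fb_ge0 R (n k) K) hq r0 hr.
  move=> /(_ _ _ _ _ _ _) H.
  have : r * (fb (n k) K (1 - p) * expR (K * (e * p / 8) * (e / 2)) *
      ((1 - p + e * p / 4) - (1 - p + e * p / 8))) <= fb (n k) K (1 - p) * (1 - p).
    apply: H.
    - move=> t ht; apply: (@ptA_up R (n k) K p e t) => //.
    - lra.
    - lra.
    - lra.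
    - by apply: mulr_ge0; [exact: ltW|exact: expR_ge0].
    - move=> t /andP[t1 t2]; apply: (@ptA_lo R (n k) K p e t) => //; lra.
  have -> : (1 - p + e * p / 4) - (1 - p + e * p / 8) = w by rewrite /w; lra.
  rewrite eg => h.
  exact: (@contra_arith R (fb (n k) K (1 - p)) (expR (K * g)) w r (1 - p) K g
    Fq0 r0 w0 g0 hE ltac:(lra) h hK1).
have hlo : K * ((1 - p) - e) < (n k - 1) * p.
  rewrite ltNge; apply/negP => hA.
  have := @dirB R (fb (n k) K) (1 - p) r (fb (n k) K (1 - p))
    (fb (n k) K (1 - p) * expR (K * (e * p / 8) * (e / 2)))
    ((1 - p) - e * p / 4) ((1 - p) - e * p / 8) (@fb_meas R (n k) K) (@fb_ge0 R (n k) K) hq r0 r1 hr.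
  move=> /(_ _ _ _ _ _ _) H.
  have ep : e * p <= e by nra.
  have : (1 - r) * (fb (n k) K (1 - p) * expR (K * (e * p / 8) * (e / 2)) *
      ((1 - p - e * p / 8) - (1 - p - e * p / 4))) <= fb (n k) K (1 - p) * (1 - (1 - p)).
    apply: H.
    - move=> t ht; apply: (@ptB_up R (n k) K p e t) => //; lra.
    - lra.
    - lra.
    - lra.
    - by apply: mulr_ge0; [exact: ltW|exact: expR_ge0].
    - move=> t /andP[t1 t2]; apply: (@ptB_lo R (n k) K p e t) => //; lra.
  have -> : (1 - p - e * p / 8) - (1 - p - e * p / 4) = w by rewrite /w; lra.
  rewrite eg => h.
  exact: (@contra_arith R (fb (n k) K (1 - p)) (expR (K * g)) w (1 - r) (1 - (1 - p)) K g
    Fq0 ltac:(lra) w0 g0 hE ltac:(lra) h hK2).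
exact: (@final_arith R p e eps K (n k)).
Qed.
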